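(* Let $G=(V,E)$ be a finite graph with boundary $B\subseteq V$. Let $H=(U,D)$ be a demand graph and $F$ a unit $H$-boundary flow in $G$. Then there exists an integral $H$-boundary flow $F^*$ such that $$\operatorname{con}_2(F^* )\le\operatorname{con}_2(F)+\sqrt{\operatorname{con}_1(F)}.$$ Furthermore, if $|B|\ge|V|^{\frac14+\epsilon}$ for some $\epsilon>0$, then $$\operatorname{con}_2(F^* )\le 2\operatorname{con}_2(F)+|B|^{\frac{2}{1+4\epsilon}}.$$
   Context: For $u,v\in V$, $\mathcal{P}_{uv}$ is the set of simple paths in $G$ between $u$ and $v$; ''$x\in p$'' means $x$ is a vertex of path $p$. Let $\mathcal{P}=\bigcup_{u,v\in B}\mathcal{P}_{uv}$. A boundary flow is a map $F:\mathcal{P}\to\mathbb{R}_+$. Its vertex congestion at $v\in V$ is $C_F(v)=\sum_{p\in\mathcal{P}:v\in p}F(p)$, and $\operatorname{con}_p(F)=\left(\sum_{v\in V}C_F(v)^p\right)^{1/p}$ for $p\ge1$. $F$ is integral if $|\{p\in\mathcal{P}_{uv}:F(p)>0\}|\le1$ for all $u,v\in B$. A demand graph is any graph $H=(U,D)$. $F$ is a unit $H$-boundary flow if there exists an injective map $g:U\to B$ such that $\sum_{p\in\mathcal{P}_{g(i)g(j)}}F(p)=1$ for every edge $(i,j)\in D$, and $F(p)=0$ whenever $p\notin\bigcup_{(i,j)\in D}\mathcal{P}_{g(i)g(j)}$. An integral $H$-boundary flow is a unit $H$-boundary flow that is also integral. *)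

(* Defs.v *)
From HB Require Import structures.
From mathcomp Require Import all_boot all_order all_algebra.
From mathcomp Require Import reals exp.
Set Implicit Arguments. Unset Strict Implicit. Unset Printing Implicit Defensive.
Import Order.TTheory GRing.Theory Num.Theory.
Local Open Scope ring_scope.

Definition simple_graph (T : finType) (e : rel T) : Prop :=
  symmetric e /\ irreflexive e.

Section BoundaryFlows.
Variables (V : finType) (e : rel V).

(* Candidate paths: vertex sequences of length <= |V| (a finite type);
   every simple path has at most |V| vertices. *)
Definition pathT := {k : 'I_(#|V|.+1) & k.-tuple V}.
Definition pseq (p : pathT) : seq V := val (tagged p).

Definition simple_path_between (u v : V) (s : seq V) : bool :=
  if s is x :: s' then
    [&& uniq s, path e x s' &
        ((x == u) && (last x s' == v)) || ((x == v) && (last x s' == u))]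
  else false.

Definition inPuv (u v : V) (p : pathT) : bool := simple_path_between u v (pseq p).

Definition inP (B : {set V}) (p : pathT) : bool :=
  [exists u in B, exists v in B, inPuv u v p].

Variable R : realType.

Definition congestion (B : {set V}) (F : pathT -> R) (v : V) : R :=
  \sum_(p : pathT | inP B p && (v \in pseq p)) F p.

Definition con (B : {set V}) (q : R) (F : pathT -> R) : R :=
  powR (\sum_(v : V) powR (congestion B F v) q) q^-1.

Definition boundary_flow (F : pathT -> R) : Prop := forall p, 0 <= F p.

Definition integral_flow (B : {set V}) (F : pathT -> R) : Prop :=
  forall u v, u \in B -> v \in B -> (#|[pred p | inPuv u v p & (0 < F p)%R]| <= 1)%N.

Definition unit_H_flow (U : finType) (D : rel U) (B : {set V}) (F : pathT -> R) : Prop :=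
  boundary_flow F /\
  exists g : U -> V,
    [/\ injective g, (forall i, g i \in B),
        (forall i j, D i j -> \sum_(p : pathT | inPuv (g i) (g j) p) F p = 1) &
        (forall p, ~~ [exists i, exists j, D i j && inPuv (g i) (g j) p] -> F p = 0)].

End BoundaryFlows.

(* Main.v *)
Require Import Defs.
From HB Require Import structures.
From mathcomp Require Import all_boot all_order all_algebra.
From mathcomp Require Import reals exp.
From mathcomp Require Import ring lra.
Import Order.TTheory GRing.Theory Num.Theory.
Local Open Scope ring_scope.

Section Abstract.
Variables (R : realType) (P V Q : finType) (mem : P -> V -> bool) (cls : P -> Q) (p0 : P).

Definition cg (F : P -> R) v := \sum_p F p * (mem p v)%:R.

Definition zc (F : P -> R) q0 p := if cls p == q0 then 0 else F p.

Lemma avg_step (F : P -> R) (q0 : Q) (A : V -> R) :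
  \sum_(p | cls p == q0) F p = 1 ->
  \sum_(p | cls p == q0) F p *
     (\sum_v ((A v + (mem p v)%:R + cg (zc F q0) v)^+2 + cg (zc F q0) v))
  <= \sum_v ((A v + cg F v)^+2 + cg F v).
Proof.
move=> H1.
have CE v : cg F v = \sum_(p | cls p == q0) F p * (mem p v)%:R + cg (zc F q0) v.
  rewrite big_mkcond /cg -big_split /=; apply: eq_bigr => p _; rewrite /zc.
  by case: ifP => _; rewrite ?mul0r ?add0r ?addr0.
under eq_bigr => p _ do rewrite big_distrr.
rewrite /= exchange_big /=; apply: ler_sum => v _.
set x := \sum_(p | cls p == q0) F p * (mem p v)%:R.
set a := A v + cg (zc F q0) v.
have -> : \sum_(p | cls p == q0) F p * ((A v + (mem p v)%:R + cg (zc F q0) v) ^+ 2 + cg (zc F q0) v)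
   = \sum_(p | cls p == q0) (F p * (a^+2 + cg (zc F q0) v) + (2 * a + 1) * (F p * (mem p v)%:R)).
  apply: eq_bigr => p _; rewrite /a; case: (mem p v) => /=; ring.
rewrite big_split /= -big_distrl /= -big_distrr /= H1 mul1r CE -/x.
rewrite -/a.
have : 0 <= x ^+ 2 by rewrite sqr_ge0.
have -> : (A v + (x + cg (zc F q0) v)) = a + x by rewrite /a; ring.
move=> hx; rewrite -subr_ge0.
have -> : (a + x) ^+ 2 + (x + cg (zc F q0) v) - (a ^+ 2 + cg (zc F q0) v + (2 * a + 1) * x) = x ^+ 2 by ring.
exact: hx.
Qed.

Lemma round_ex (n : nat) : forall (S : {set Q}) (F : P -> R) (A : V -> R), #|S| = n ->
  (forall p, 0 <= F p) ->
  (forall q, q \in S -> \sum_(p | cls p == q) F p = 1) ->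
  (forall p, cls p \notin S -> F p = 0) ->
  exists sigma : Q -> P, (forall q, q \in S -> cls (sigma q) = q /\ 0 < F (sigma q)) /\
    \sum_v (A v + \sum_(q in S) (mem (sigma q) v)%:R)^+2 <=
    \sum_v ((A v + cg F v)^+2 + cg F v).
Proof.
elim: n => [|n IH] S F A cS F0 F1 Fz.
  have S0 : S = set0 by apply/eqP; rewrite -cards_eq0 cS.
  exists (fun _ => p0); split; first by move=> q; rewrite S0 inE.
  have cg0 v : cg F v = 0.
    by rewrite /cg big1 // => p _; rewrite Fz ?mul0r // S0 inE.
  apply: ler_sum => v _; rewrite cg0 S0 big_set0 !addr0 //.
have [q0 q0S] : exists q0, q0 \in S.
  have : (0 < #|S|)%N by rewrite cS.
  by rewrite card_gt0 => /set0Pn.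
set RHS := \sum_v ((A v + cg F v)^+2 + cg F v).
set b := fun p => \sum_v ((A v + (mem p v)%:R + cg (zc F q0) v)^+2 + cg (zc F q0) v).
have [p /and3P [cp Fp bp]] : exists p, [&& cls p == q0, 0 < F p & b p <= RHS].
  case: (boolP [exists p, [&& cls p == q0, 0 < F p & b p <= RHS]]) => [/existsP //|/existsPn Hn]; exfalso.
  have avg := avg_step F q0 A (F1 _ q0S).
  have : \sum_(p | cls p == q0) F p * (b p - RHS) <= 0.
    under eq_bigr => p _ do rewrite mulrBr.
    by rewrite sumrB -big_distrl /= F1 // mul1r subr_le0.
  move=> Hle.
  have Hge : forall p, cls p == q0 -> 0 <= F p * (b p - RHS).
    move=> p cp; have := Hn p; rewrite cp /=.
    case: (ltrgt0P (F p)) => [Fp|Fp|->]; last by rewrite mul0r.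
    - by rewrite /= -ltNge => h; rewrite mulr_ge0 // ?ltW // subr_gt0.
    - by have := F0 p; rewrite leNgt Fp.
  have E0 : \sum_(p | cls p == q0) F p * (b p - RHS) = 0.
    by apply/eqP; rewrite eq_le Hle sumr_ge0.
  have := F1 _ q0S; rewrite big1 => [|p cp].
    by move/eqP; rewrite eq_sym oner_eq0.
  have := (psumr_eq0P Hge E0 cp) => /eqP; rewrite mulf_eq0 => /orP [/eqP //|].
  rewrite subr_eq0 => /eqP bE.
  have := Hn p; rewrite cp bE lexx andbT /= -leNgt => Fle.
  by apply/eqP; rewrite eq_le Fle F0.
have cS' : #|S :\ q0| = n by move: cS; rewrite (cardsD1 q0 S) q0S add1n => -[].
have [|||sg [Hs Hb]] := IH (S :\ q0) (zc F q0) (fun v => A v + (mem p v)%:R) cS'.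
- by move=> r; rewrite /zc; case: ifP.
- move=> q; rewrite !inE => /andP [qq0 qS]; rewrite -(F1 q qS).
  apply: eq_bigr => r /eqP cr; rewrite /zc cr (negbTE qq0) //.
- move=> r; rewrite /zc !inE; case: ifP => //= _; exact: Fz.
exists (fun q => if q == q0 then p else sg q); split.
  move=> q qS; case: ifP => [/eqP ->|qq0]; first by rewrite (eqP cp).
  have [h1 h2] : cls (sg q) = q /\ 0 < zc F q0 (sg q) by apply: Hs; rewrite !inE qq0.
  by move: h2; rewrite /zc h1 qq0.
apply: le_trans bp; apply: le_trans Hb; rewrite le_eqVlt; apply/orP; left; apply/eqP.
apply: eq_bigr => v _; congr (_ ^+ 2).
rewrite (bigD1 q0) //= eqxx addrA; congr (_ + _).
apply: eq_big => q; first by rewrite !inE andbC.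
by move=> /andP [_ /negbTE ->].
Qed.
End Abstract.
Set Implicit Arguments. Unset Strict Implicit. Unset Printing Implicit Defensive.
Section Main.
Variables (R : realType) (V : finType) (e : rel V) (B : {set V}).

Definition simplep (s : seq V) := if s is x :: s' then uniq s && path e x s' else false.
Definition clsp (p : pathT V) : {set V} :=
  if pseq p is x :: s then [set x; last x s] else set0.

Lemma set2_eqE (x y u v : V) : u != v ->
  ([set x; y] == [set u; v]) = ((x == u) && (y == v)) || ((x == v) && (y == u)).
Proof.
move=> uv; apply/eqP/idP => [E|]; last first.
  by case/orP => /andP [/eqP -> /eqP ->] //; rewrite setUC.
have hu : u \in [set x; y] by rewrite E set21.
have hv : v \in [set x; y] by rewrite E set22.
rewrite !inE in hu hv.
case/orP: hu => /eqP hu; case/orP: hv => /eqP hv; subst.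
- by rewrite eqxx in uv.
- by rewrite !eqxx.
- by rewrite !eqxx orbT.
- by rewrite eqxx in uv.
Qed.

Lemma inPuv_eq u v p : u != v ->
  inPuv e u v p = simplep (pseq p) && (clsp p == [set u; v]).
Proof.
move=> uv; rewrite /inPuv /clsp /simple_path_between.
case: (pseq p) => [|x s] //=; rewrite set2_eqE //; by rewrite andbA.
Qed.

Lemma inPuv_cls u v p : inPuv e u v p -> clsp p = [set u; v].
Proof.
rewrite /inPuv /clsp /simple_path_between.
case: (pseq p) => [|x s] //= /and3P [_ _ /orP [] /andP [/eqP -> /eqP ->]] //.
by rewrite setUC.
Qed.

Lemma inPuv_simple u v p : inPuv e u v p -> simplep (pseq p).
Proof.
rewrite /inPuv /simple_path_between.
by case: (pseq p) => [|x s] //= /and3P [-> -> _].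
Qed.

End Main.

Lemma sum_ind (R : realType) (T : finType) (P : pred T) (x : T) :
  \sum_(p | P p) ((x == p)%:R : R) = (P x)%:R.
Proof.
rewrite big_mkcond (bigD1 x) //= eqxx big1 ?addr0; first by case: (P x).
by move=> p /negbTE; rewrite eq_sym => ->; case: (P p).
Qed.

Lemma sqrt_le (R : realType) (X y : R) : 0 <= y -> X <= y ^+ 2 -> Num.sqrt X <= y.
Proof.
move=> y0 Xy; rewrite -(ger0_norm y0) -sqrtr_sqr.
case: (lerP 0 X) => X0; first by rewrite ler_sqrt // sqr_ge0.
by rewrite ltr0_sqrtr // sqrtr_ge0.
Qed.

Theorem mainTheorem11 (R : realType) (V : finType) (e : rel V) (B : {set V})
  (U : finType) (D : rel U) (F : pathT V -> R) :
  simple_graph e -> simple_graph D -> unit_H_flow e D B F ->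
  exists Fs : pathT V -> R,
    [/\ unit_H_flow e D B Fs, integral_flow e B Fs,
        con e B 2 Fs <= con e B 2 F + Num.sqrt (con e B 1 F) &
        forall eps : R, 0 < eps ->
          powR (#|V|%:R) (4^-1 + eps) <= (#|B|%:R) ->
          con e B 2 Fs <= 2 * con e B 2 F + powR (#|B|%:R) (2 / (1 + 4 * eps))].
Proof.
move=> _ [_ Dirr] [F0 [g [ginj gB Fsum Fzero]]].
have gneq i j : D i j -> g i != g j.
  move=> Dij; apply/negP => /eqP /ginj ij; subst; by rewrite Dirr in Dij.
pose S := [set q | [exists i, exists j, D i j && (q == [set g i; g j])]].
pose mem := fun (p : pathT V) v => inP e B p && (v \in pseq p).
pose p0 : pathT V := existT (fun k : 'I_(#|V|.+1) => k.-tuple V) ord0 [tuple].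
have Fpos p : F p != 0 -> exists i j, D i j /\ inPuv e (g i) (g j) p.
  move=> Fp; case: (boolP [exists i, exists j, D i j && inPuv e (g i) (g j) p]).
    by move=> /existsP [i /existsP [j /andP [? ?]]]; exists i, j.
  by move/Fzero => F0'; rewrite F0' eqxx in Fp.
have F1 : forall q, q \in S -> \sum_(p | clsp p == q) F p = 1.
  move=> q; rewrite inE => /existsP [i /existsP [j /andP [Dij /eqP ->]]].
  rewrite -(Fsum i j Dij) [RHS]big_mkcond [LHS]big_mkcond; apply: eq_bigr => p _.
  rewrite inPuv_eq ?gneq //.
  case: (boolP (simplep e (pseq p))) => sp //=.
  case: ifP => // _; apply/eqP; apply: contraT => /Fpos [i' [j' [_ h]]].
  by rewrite (inPuv_simple h) in sp.
have Fz : forall p, clsp p \notin S -> F p = 0.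
  move=> p; apply: contraNeq => /Fpos [i [j [Dij h]]].
  rewrite inE; apply/existsP; exists i; apply/existsP; exists j.
  by rewrite Dij (inPuv_cls h) eqxx.
have [sg [Hs Hb]] := @round_ex R _ _ _ mem (@clsp V) p0 _ S F (fun _ => 0) (erefl #|S|) F0 F1 Fz.
have Hq q : q \in S -> exists i j, [/\ D i j, inPuv e (g i) (g j) (sg q) & clsp (sg q) = q].
  move=> qS; have [c1 c2] := Hs q qS.
  have [i [j [Dij h]]] := Fpos (sg q) (negbT (gt_eqF c2)).
  by exists i, j.
pose Fs p : R := \sum_(q in S) (sg q == p)%:R.
have congF v : congestion e B F v = cg _ _ _ mem F v.
  rewrite /congestion /cg big_mkcond; apply: eq_bigr => p _.
  by rewrite /mem; case: (_ && _); rewrite ?mulr1 ?mulr0.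
have congFs v : congestion e B Fs v = \sum_(q in S) (mem (sg q) v)%:R.
  rewrite /congestion /Fs exchange_big /=; apply: eq_bigr => q _.
  exact: sum_ind.
have Fs_ex p : 0 < Fs p -> exists2 q, q \in S & sg q = p.
  move=> h; case: (boolP [exists q, (q \in S) && (sg q == p)]).
    by move=> /existsP [q /andP [qS /eqP <-]]; exists q.
  move=> /existsPn H; rewrite /Fs big1 ?ltxx // in h.
  by move=> q qS; have := H q; rewrite qS /= => /negbTE ->.
have sgP q : q \in S -> inP e B (sg q) && simplep e (pseq (sg q)).
  move=> qS; have [i [j [Dij h _]]] := Hq q qS.
  rewrite (inPuv_simple h) andbT; apply/existsP; exists (g i); rewrite gB /=.
  by apply/existsP; exists (g j); rewrite gB.
have gS i j : D i j -> [set g i; g j] \in S.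
  by move=> Dij; rewrite inE; apply/existsP; exists i; apply/existsP; exists j; rewrite Dij eqxx.
have C0 v : 0 <= congestion e B F v by apply: sumr_ge0 => p _; exact: F0.
have N0 v : 0 <= congestion e B Fs v.
  by rewrite congFs; apply: sumr_ge0 => q _; apply: ler0n.
have con2 (G : pathT V -> R) : (forall v, 0 <= congestion e B G v) ->
    con e B 2 G = Num.sqrt (\sum_v congestion e B G v ^+ 2).
  move=> G0; rewrite /con powR12_sqrt; last by apply: sumr_ge0 => v _; apply: powR_ge0.
  by congr Num.sqrt; apply: eq_bigr => v _; rewrite powR_mulrn.
have con1 : con e B 1 F = \sum_v congestion e B F v.
  rewrite /con invr1 powRr1; last by apply: sumr_ge0 => v _; apply: powR_ge0.
  by apply: eq_bigr => v _; rewrite powRr1.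
have HT : \sum_v congestion e B Fs v ^+ 2 <=
    \sum_v congestion e B F v ^+ 2 + \sum_v congestion e B F v.
  move: Hb; rewrite -big_split /=.
  under eq_bigr => v _ do rewrite add0r -congFs.
  by under [X in _ <= X]eq_bigr => v _ do rewrite add0r -congF.
have S1le : \sum_v congestion e B F v <= \sum_v congestion e B F v ^+ 2 + #|V|%:R.
  have -> : (#|V|%:R : R) = \sum_(v : V) 1.
    by rewrite sumr_const.
  rewrite -big_split /=; apply: ler_sum => v _.
  have := C0 v; set c := congestion e B F v => c0; nra.
move: HT S1le; set T := \sum_v _ ^+ 2; set S2 := \sum_v _ ^+ 2; set S1 := \sum_v _.
move=> HT S1le.
have S20 : 0 <= S2 by apply: sumr_ge0 => v _; apply: sqr_ge0.
have S10 : 0 <= S1 by apply: sumr_ge0 => v _; apply: C0.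
have a0 := sqrtr_ge0 S2.
have b0 := sqrtr_ge0 S1.
have aa := sqr_sqrtr S20.
have bb := sqr_sqrtr S10.
exists Fs; split.
- split; first by move=> p; apply: sumr_ge0 => q _; apply: ler0n.
  exists g; split => //.
    move=> i j Dij; rewrite /Fs exchange_big /=.
    rewrite (eq_bigr (fun q => (([set g i; g j] == q) : nat)%:R)); last first.
      move=> q qS; rewrite sum_ind; have [i' [j' [D' h c]]] := Hq q qS.
      by rewrite inPuv_eq ?gneq // (inPuv_simple h) c eq_sym.
    by rewrite (@sum_ind R _ (fun q => q \in S)) (gS _ _ Dij).
  move=> p Hp; rewrite /Fs big1 // => q qS; case: eqP => // E; exfalso.
  have [i [j [Dij h _]]] := Hq q qS.
  move/negP: Hp; apply; apply/existsP; exists i; apply/existsP; exists j; by rewrite Dij -E h.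
- move=> u v uB vB; apply/card_le1_eqP.
  have key p : inPuv e u v p -> 0 < Fs p -> p = sg [set u; v].
    move=> h f; have [q qS E] := Fs_ex p f; subst p; have [c1 _] := Hs q qS.
    by rewrite -(inPuv_cls h) c1.
  move=> p1 p2 /andP [h1 f1] /andP [h2 f2].
  by rewrite (key p1 h1 f1) (key p2 h2 f2).
- rewrite (con2 F) // (con2 Fs) // con1 -/T -/S2 -/S1.
  apply: sqrt_le; first by rewrite addr_ge0.
  have := mulr_ge0 a0 b0; rewrite sqrrD aa bb => ab; lra.
- move=> eps ep hB.
  have Bp : Num.sqrt (#|V|%:R) <= powR (#|B|%:R) (2 / (1 + 4 * eps)).
    rewrite -powR12_sqrt ?ler0n //.
    have -> : (2^-1 : R) = (4^-1 + eps) * (2 / (1 + 4 * eps)).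
      by field; apply/eqP; lra.
    rewrite powRrM; apply: ge0_ler_powR => //.
    - by apply: divr_ge0 => //; lra.
    - by rewrite nnegrE powR_ge0.
    - by rewrite nnegrE ler0n.
  have m0 := sqrtr_ge0 (#|V|%:R : R).
  have mm := sqr_sqrtr (ler0n R #|V|).
  set m := Num.sqrt _ in m0 mm Bp; set bB := powR _ _ in Bp.
  rewrite (con2 F) // (con2 Fs) // -/T -/S2.
  apply: sqrt_le; first by rewrite addr_ge0 ?mulr_ge0 // powR_ge0.
  have h1 := mulr_ge0 a0 (le_trans m0 Bp).
  have h2 : m ^+ 2 <= bB ^+ 2 by rewrite lerXn2r // ?nnegrE // (le_trans m0 Bp).
  rewrite -/bB.
  have key : T <= 4 * S2 + 4 * (Num.sqrt S2 * bB) + bB ^+ 2 by lra.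
  apply: (le_trans key); rewrite le_eqVlt; apply/orP; left; apply/eqP.
  rewrite sqrrD exprMn aa; ring.
Qed.
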